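(* Let $\mathcal{D}$ be a proof in $\mathsf{NIKm}$ of the polarised nested sequent $\Sigma$. Then there is a proof in $\mathbf{C}_{\mathbf{IK}}$ of the flat bi-nested sequent $\mathrm{fl}(\Sigma)$.
   Context: Formulas are generated by $A::=p\mid\bot\mid\top\mid A\wedge A\mid A\vee A\mid A\supset A\mid\Box A\mid\Diamond A$. Polarised nested sequents: either empty or $A_1^\bullet,\dots,A_k^\bullet,B_1^\circ,\dots,B_h^\circ,[\Sigma_1],\dots,[\Sigma_n]$ (a multiset), with $A_i,B_j$ formulas, $\Sigma_l$ polarised nested sequents; $^\bullet$ marks input (left) and $^\circ$ output (right) formulas. A polarised context $\Sigma\{\ \}$ is a polarised nested sequent with a hole in place of one formula occurrence (at some node of its tree); $\Sigma\{\Pi\}$ fills the hole with the polarised nested sequent $\Pi$ (its formulas and blocks are added at that node). $\Sigma^\downarrow\{\ \}$ denotes $\Sigma\{\ \}$ with all output formulas removed everywhere. The rules of $\mathsf{NIKm}$ (premisses / conclusion) are: axioms $\Sigma\{\bot^\bullet\}$ and $\Sigma\{p^\bullet,p^\circ\}$; $(\wedge^\bullet)$ $\Sigma\{A^\bullet,B^\bullet\}$ / $\Sigma\{(A\wedge B)^\bullet\}$; $(\wedge^\circ)$ $\Sigma\{A^\circ\}$, $\Sigma\{B^\circ\}$ / $\Sigma\{(A\wedge B)^\circ\}$; $(\vee^\bullet)$ $\Sigma\{A^\bullet\}$, $\Sigma\{B^\bullet\}$ / $\Sigma\{(A\vee B)^\bullet\}$; $(\vee^\circ)$ $\Sigma\{A^\circ,B^\circ\}$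 / $\Sigma\{(A\vee B)^\circ\}$; $(\supset^\bullet)$ $\Sigma\{A^\circ\}$, $\Sigma\{B^\bullet\}$ / $\Sigma\{(A\supset B)^\bullet\}$; $(\supset^\circ)$ $\Sigma^\downarrow\{A^\bullet,B^\circ\}$ / $\Sigma\{(A\supset B)^\circ\}$; $(\Box^\bullet)$ $\Sigma\{[\Delta,A^\bullet]\}$ / $\Sigma\{(\Box A)^\bullet,[\Delta]\}$; $(\Box^\circ)$ $\Sigma^\downarrow\{[A^\circ]\}$ / $\Sigma\{(\Box A)^\circ\}$; $(\Diamond^\bullet)$ $\Sigma\{[A^\bullet]\}$ / $\Sigma\{(\Diamond A)^\bullet\}$; $(\Diamond^\circ)$ $\Sigma\{[\Delta,A^\circ]\}$ / $\Sigma\{(\Diamond A)^\circ,[\Delta]\}$; contractions $\Sigma\{A^\bullet,A^\bullet\}$ / $\Sigma\{A^\bullet\}$ and $\Sigma\{A^\circ,A^\circ\}$ / $\Sigma\{A^\circ\}$. A proof is a finite tree of such rule instances with all leaves axioms. Translation: for a polarised nested sequent $\Sigma=A_1^\bullet,\dots,A_k^\bullet,B_1^\circ,\dots,B_h^\circ,[\Sigma_1],\dots,[\Sigma_n]$, $\mathrm{fl}(\Sigma)$ is the bi-nested sequent $A_1,\dots,A_k\Rightarrow B_1,\dots,B_h,[\mathrm{fl}(\Sigma_1)],\dots,[\mathrm{fl}(\Sigma_n)]$ (containing no implication blocks). Bi-nested sequents: the empty sequent $\Rightarrow$ is one; if $\Gamma,\Delta'$ are finite multisets of formulas and $S_1,\dots,S_m,T_1,\dots,T_n$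 are bi-nested sequents then $\Gamma\Rightarrow\Delta',\langle S_1\rangle,\dots,\langle S_m\rangle,[T_1],\dots,[T_n]$ is one ($\langle S\rangle$ implication block, $[T]$ modal block). A context $G\{\ \}$ is either the hole $\{\ \}$, or $\Gamma\Rightarrow\Delta,\langle G'\{\ \}\rangle$, or $\Gamma\Rightarrow\Delta,[G'\{\ \}]$; $G\{S\}$ fills the hole with $S$. For a consequent $\Delta$, $\Delta^*$ is $\emptyset$ if $\Delta$ has no modal block, and if $\Delta=\Delta_0,[\Lambda_1\Rightarrow\Theta_1],\dots,[\Lambda_k\Rightarrow\Theta_k]$ with $\Delta_0$ free of modal blocks, $\Delta^*=[\Lambda_1\Rightarrow\Theta_1^*],\dots,[\Lambda_k\Rightarrow\Theta_k^*]$. The calculus $\mathbf{C}_{\mathbf{IK}}$ (premisses / conclusion): axioms $G\{\Gamma,\bot\Rightarrow\Delta\}$, $G\{\Gamma\Rightarrow\top,\Delta\}$, $G\{\Gamma,p\Rightarrow\Delta,p\}$ ($p$ atomic); $(\wedge_L)$ $G\{A,B,\Gamma\Rightarrow\Delta\}$ / $G\{A\wedge B,\Gamma\Rightarrow\Delta\}$; $(\wedge_R)$ $G\{\Gamma\Rightarrow\Delta,A\}$, $G\{\Gamma\Rightarrow\Delta,B\}$ / $G\{\Gamma\Rightarrow\Delta,A\wedge B\}$; $(\vee_L)$ $G\{\Gamma,A\Rightarrow\Delta\}$, $G\{\Gamma,B\Rightarrow\Delta\}$ / $G\{\Gamma,A\vee B\Rightarrow\Delta\}$; $(\vee_R)$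 $G\{\Gamma\Rightarrow\Delta,A,B\}$ / $G\{\Gamma\Rightarrow\Delta,A\vee B\}$; $(\supset_L)$ $G\{\Gamma,A\supset B\Rightarrow A,\Delta\}$, $G\{\Gamma,B\Rightarrow\Delta\}$ / $G\{\Gamma,A\supset B\Rightarrow\Delta\}$; $(\supset_R)$ $G\{\Gamma\Rightarrow\Delta,\langle A\Rightarrow B\rangle\}$ / $G\{\Gamma\Rightarrow\Delta,A\supset B\}$; $(\Box_L)$ $G\{\Gamma,\Box A\Rightarrow\Delta,[\Sigma,A\Rightarrow\Pi]\}$ / $G\{\Gamma,\Box A\Rightarrow\Delta,[\Sigma\Rightarrow\Pi]\}$; $(\Box_R)$ $G\{\Gamma\Rightarrow\Delta,\langle\,\Rightarrow[\,\Rightarrow A]\rangle\}$ / $G\{\Gamma\Rightarrow\Delta,\Box A\}$; $(\Diamond_L)$ $G\{\Gamma\Rightarrow\Delta,[A\Rightarrow\,]\}$ / $G\{\Gamma,\Diamond A\Rightarrow\Delta\}$; $(\Diamond_R)$ $G\{\Gamma\Rightarrow\Delta,\Diamond A,[\Sigma\Rightarrow\Pi,A]\}$ / $G\{\Gamma\Rightarrow\Delta,\Diamond A,[\Sigma\Rightarrow\Pi]\}$; (trans) $G\{\Gamma,\Gamma'\Rightarrow\Delta,\langle\Gamma',\Sigma\Rightarrow\Pi\rangle\}$ / $G\{\Gamma,\Gamma'\Rightarrow\Delta,\langle\Sigma\Rightarrow\Pi\rangle\}$; $(\mathrm{inter}_{fc})$ $G\{\Gamma\Rightarrow\Delta,\langle\Sigma\Rightarrow\Pi,[\Lambda\Rightarrow\Theta^*]\rangle,[\Lambda\Rightarrow\Theta]\}$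 / $G\{\Gamma\Rightarrow\Delta,\langle\Sigma\Rightarrow\Pi\rangle,[\Lambda\Rightarrow\Theta]\}$; $(\mathrm{inter}_{bc})$ $G\{\Gamma\Rightarrow\Delta,[\Lambda\Rightarrow\Theta,\langle\Sigma\Rightarrow\Pi\rangle],\langle\,\Rightarrow[\Sigma\Rightarrow\Pi]\rangle\}$ / $G\{\Gamma\Rightarrow\Delta,[\Lambda\Rightarrow\Theta,\langle\Sigma\Rightarrow\Pi\rangle]\}$. A proof of $S$ is a finite tree of sequents built with these rules, with root $S$ and all leaves axioms. *)

(* Defs.v *)
(* plain lists, multisets handled via explicit exchange rules. *)
From Stdlib Require Import List Permutation.
Import ListNotations.

Inductive form : Type :=
| Var : nat -> form
| Bot : form
| Top : form
| And : form -> form -> form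
| Or  : form -> form -> form
| Imp : form -> form -> form
| Box : form -> form
| Dia : form -> form.

(* PS inputs outputs blocks  ==  inputs^•, outputs^°, [blocks] (a multiset;
   the list order is irrelevant thanks to the exchange rule below). *)
Inductive pseq : Type :=
| PS : list form -> list form -> list pseq -> pseq.

(* PHole G D B : the node containing the hole, whose other content is G^•,D^°,[B].
   PDown G D B c : a node with content G^•,D^°,[B] and one more block [c]. *)
Inductive pctx : Type :=
| PHole : list form -> list form -> list pseq -> pctx
| PDown : list form -> list form -> list pseq -> pctx -> pctx.

Fixpoint pfill (c : pctx) (p : pseq) : pseq :=
  match c with
  | PHole G D B => match p with PS G' D' B' => PS (G ++ G') (D ++ D') (B ++ B') end
  | PDown G D B c' => PS G D (pfill c' p :: B)
  end.

Fixpoint perase (s : pseq) : pseq :=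
  match s with PS G _ B => PS G [] (map perase B) end.

Fixpoint pdown (c : pctx) : pctx :=
  match c with
  | PHole G _ B => PHole G [] (map perase B)
  | PDown G _ B c' => PDown G [] (map perase B) (pdown c')
  end.

Definition pin (A : form) : pseq := PS [A] [] [].
Definition pout (A : form) : pseq := PS [] [A] [].

Inductive nikm : pseq -> Prop :=
| nikm_exch : forall c G D B G' D' B',
    Permutation G G' -> Permutation D D' -> Permutation B B' ->
    nikm (pfill c (PS G D B)) -> nikm (pfill c (PS G' D' B'))
| nikm_bot : forall c, nikm (pfill c (pin Bot))
| nikm_ax : forall c p, nikm (pfill c (PS [Var p] [Var p] []))
| nikm_and_in : forall c A B,
    nikm (pfill c (PS [A; B] [] [])) -> nikm (pfill c (pin (And A B)))
| nikm_and_out : forall c A B,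
    nikm (pfill c (pout A)) -> nikm (pfill c (pout B)) -> nikm (pfill c (pout (And A B)))
| nikm_or_in : forall c A B,
    nikm (pfill c (pin A)) -> nikm (pfill c (pin B)) -> nikm (pfill c (pin (Or A B)))
| nikm_or_out : forall c A B,
    nikm (pfill c (PS [] [A; B] [])) -> nikm (pfill c (pout (Or A B)))
| nikm_imp_in : forall c A B,
    nikm (pfill c (pout A)) -> nikm (pfill c (pin B)) -> nikm (pfill c (pin (Imp A B)))
| nikm_imp_out : forall c A B,
    nikm (pfill (pdown c) (PS [A] [B] [])) -> nikm (pfill c (pout (Imp A B)))
| nikm_box_in : forall c A G D B,
    nikm (pfill c (PS [] [] [PS (A :: G) D B])) ->
    nikm (pfill c (PS [Box A] [] [PS G D B]))
| nikm_box_out : forall c A,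
    nikm (pfill (pdown c) (PS [] [] [pout A])) -> nikm (pfill c (pout (Box A)))
| nikm_dia_in : forall c A,
    nikm (pfill c (PS [] [] [pin A])) -> nikm (pfill c (pin (Dia A)))
| nikm_dia_out : forall c A G D B,
    nikm (pfill c (PS [] [] [PS G (A :: D) B])) ->
    nikm (pfill c (PS [] [Dia A] [PS G D B]))
| nikm_ctr_in : forall c A,
    nikm (pfill c (PS [A; A] [] [])) -> nikm (pfill c (pin A))
| nikm_ctr_out : forall c A,
    nikm (pfill c (PS [] [A; A] [])) -> nikm (pfill c (pout A)).

(* BS Gamma Delta Imps Mods == Gamma => Delta, <Imps>, [Mods] (multisets). *)
Inductive bseq : Type :=
| BS : list form -> list form -> list bseq -> list bseq -> bseq.

(* Contexts G{ }: the hole, or Gamma => Delta, <G'{ }>, or Gamma => Delta, [G'{ }],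
   where the consequent Delta = formulas Df, implication blocks Is, modal blocks M. *)
Inductive bctx : Type :=
| BHole : bctx
| BImp : list form -> list form -> list bseq -> list bseq -> bctx -> bctx
| BMod : list form -> list form -> list bseq -> list bseq -> bctx -> bctx.

Fixpoint bfill (c : bctx) (s : bseq) : bseq :=
  match c with
  | BHole => s
  | BImp G D Is M c' => BS G D (bfill c' s :: Is) M
  | BMod G D Is M c' => BS G D Is (bfill c' s :: M)
  end.

Fixpoint bstar (s : bseq) : bseq :=
  match s with BS L _ _ M => BS L [] [] (map bstar M) end.

Inductive cik : bseq -> Prop :=
| cik_exch : forall c G D Is M G' D' Is' M',
    Permutation G G' -> Permutation D D' -> Permutation Is Is' -> Permutation M M' ->
    cik (bfill c (BS G D Is M)) -> cik (bfill c (BS G' D' Is' M'))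
| cik_bot : forall c G D Is M, cik (bfill c (BS (Bot :: G) D Is M))
| cik_top : forall c G D Is M, cik (bfill c (BS G (Top :: D) Is M))
| cik_ax : forall c p G D Is M, cik (bfill c (BS (Var p :: G) (Var p :: D) Is M))
| cik_andL : forall c A B G D Is M,
    cik (bfill c (BS (A :: B :: G) D Is M)) -> cik (bfill c (BS (And A B :: G) D Is M))
| cik_andR : forall c A B G D Is M,
    cik (bfill c (BS G (A :: D) Is M)) -> cik (bfill c (BS G (B :: D) Is M)) ->
    cik (bfill c (BS G (And A B :: D) Is M))
| cik_orL : forall c A B G D Is M,
    cik (bfill c (BS (A :: G) D Is M)) -> cik (bfill c (BS (B :: G) D Is M)) ->
    cik (bfill c (BS (Or A B :: G) D Is M))
| cik_orR : forall c A B G D Is M,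
    cik (bfill c (BS G (A :: B :: D) Is M)) -> cik (bfill c (BS G (Or A B :: D) Is M))
| cik_impL : forall c A B G D Is M,
    cik (bfill c (BS (Imp A B :: G) (A :: D) Is M)) -> cik (bfill c (BS (B :: G) D Is M)) ->
    cik (bfill c (BS (Imp A B :: G) D Is M))
| cik_impR : forall c A B G D Is M,
    cik (bfill c (BS G D (BS [A] [B] [] [] :: Is) M)) ->
    cik (bfill c (BS G (Imp A B :: D) Is M))
| cik_boxL : forall c A G D Is M S P PI PM,
    cik (bfill c (BS (Box A :: G) D Is (BS (A :: S) P PI PM :: M))) ->
    cik (bfill c (BS (Box A :: G) D Is (BS S P PI PM :: M)))
| cik_boxR : forall c A G D Is M,
    cik (bfill c (BS G D (BS [] [] [] [BS [] [A] [] []] :: Is) M)) ->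
    cik (bfill c (BS G (Box A :: D) Is M))
| cik_diaL : forall c A G D Is M,
    cik (bfill c (BS G D Is (BS [A] [] [] [] :: M))) ->
    cik (bfill c (BS (Dia A :: G) D Is M))
| cik_diaR : forall c A G D Is M S P PI PM,
    cik (bfill c (BS G (Dia A :: D) Is (BS S (A :: P) PI PM :: M))) ->
    cik (bfill c (BS G (Dia A :: D) Is (BS S P PI PM :: M)))
| cik_trans : forall c G G' D Is M S P PI PM,
    cik (bfill c (BS (G ++ G') D (BS (G' ++ S) P PI PM :: Is) M)) ->
    cik (bfill c (BS (G ++ G') D (BS S P PI PM :: Is) M))
| cik_inter_fc : forall c G D Is M S P PI PM T,
    cik (bfill c (BS G D (BS S P PI (bstar T :: PM) :: Is) (T :: M))) ->
    cik (bfill c (BS G D (BS S P PI PM :: Is) (T :: M)))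
| cik_inter_bc : forall c G D Is M L Th ThI ThM Q,
    cik (bfill c (BS G D (BS [] [] [] [Q] :: Is) (BS L Th (Q :: ThI) ThM :: M))) ->
    cik (bfill c (BS G D Is (BS L Th (Q :: ThI) ThM :: M))).

Fixpoint fl (s : pseq) : bseq :=
  match s with PS G D B => BS G D [] (map fl B) end.

(* Main.v *)
Require Import Defs.
From Stdlib Require Import List Permutation.
Import ListNotations.

Definition bG (s : bseq) := match s with BS G _ _ _ => G end.
Definition bD (s : bseq) := match s with BS _ D _ _ => D end.
Definition bI (s : bseq) := match s with BS _ _ J _ => J end.
Definition bM (s : bseq) := match s with BS _ _ _ M => M end.

Fixpoint allex (R : bseq -> bseq -> Prop) (L : list bseq) (l : list bseq) : Prop :=
  match l with [] => True | x :: l' => (exists y, In y L /\ R x y) /\ allex R L l' end.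

Fixpoint lcov (F : form) (G : list form) (M : list bseq) : Prop :=
  In F G \/
  match F with
  | And A B => lcov A G M /\ lcov B G M
  | Or A B => lcov A G M \/ lcov B G M
  | Imp A B => lcov B G M
  | Dia A => exists T, In T M /\ lcov A (bG T) (bM T)
  | _ => False
  end.

Fixpoint rcov (F : form) (D : list form) (Is : list bseq) : Prop :=
  In F D \/
  match F with
  | And A B => rcov A D Is \/ rcov B D Is
  | Or A B => rcov A D Is /\ rcov B D Is
  | Imp A B => exists I, In I Is /\ lcov A (bG I) (bM I) /\ rcov B (bD I) (bI I)
  | Box A => exists I, In I Is /\ exists T, In T (bM I) /\ rcov A (bD T) (bI T)
  | _ => False
  end.

Fixpoint cover (X Y : bseq) {struct X} : Prop :=
  match X with
  | BS G D Is M =>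
    Forall (fun A => lcov A (bG Y) (bM Y)) G /\
    Forall (fun A => rcov A (bD Y) (bI Y)) D /\
    allex cover (bI Y) Is /\ allex cover (bM Y) M
  end.

Fixpoint bseq_ind' (P : bseq -> Prop)
  (H : forall G D Is M, Forall P Is -> Forall P M -> P (BS G D Is M)) (s : bseq) : P s :=
  match s with
  | BS G D Is M => H G D Is M
      ((fix f l := match l return Forall P l with [] => Forall_nil _
          | x :: l' => Forall_cons _ (bseq_ind' P H x) (f l') end) Is)
      ((fix f l := match l return Forall P l with [] => Forall_nil _
          | x :: l' => Forall_cons _ (bseq_ind' P H x) (f l') end) M)
  end.

Lemma allex_iff R L l : allex R L l <-> (forall x, In x l -> exists y, In y L /\ R x y).
Proof.
  induction l as [|a l IH]; simpl; split.
  - intros _ x [].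
  - auto.
  - intros [H1 H2] x [<-|Hx]; auto. apply IH; auto.
  - intros H; split; auto. apply IH; auto.
Qed.

Lemma cover_iff G D Is M Y : cover (BS G D Is M) Y <->
  (forall A, In A G -> lcov A (bG Y) (bM Y)) /\
  (forall A, In A D -> rcov A (bD Y) (bI Y)) /\
  (forall x, In x Is -> exists y, In y (bI Y) /\ cover x y) /\
  (forall x, In x M -> exists y, In y (bM Y) /\ cover x y).
Proof.
  simpl. rewrite !Forall_forall, !allex_iff. tauto.
Qed.

Lemma lcov_in F G M : In F G -> lcov F G M.
Proof. destruct F; simpl; auto. Qed.
Lemma rcov_in F D Is : In F D -> rcov F D Is.
Proof. destruct F; simpl; auto. Qed.

Lemma cover_refl X : cover X X.
Proof.
  induction X as [G D Is M HI HM] using bseq_ind'.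
  apply cover_iff; simpl; repeat split.
  - intros; apply lcov_in; auto.
  - intros; apply rcov_in; auto.
  - intros x Hx; exists x; split; auto. rewrite Forall_forall in HI; auto.
  - intros x Hx; exists x; split; auto. rewrite Forall_forall in HM; auto.
Qed.

Definition lsub T T2 := forall F, lcov F (bG T) (bM T) -> lcov F (bG T2) (bM T2).

Lemma lcov_trans F : forall G M G2 M2, lcov F G M ->
  (forall A, In A G -> lcov A G2 M2) ->
  (forall T, In T M -> exists T2, In T2 M2 /\ lsub T T2) -> lcov F G2 M2.
Proof.
  induction F; intros G M G2 M2 H HG HM; simpl in H;
    (destruct H as [H|H]; [apply HG; auto|]); simpl; right; try tauto.
  - destruct H; split; eauto.
  - destruct H; [left|right]; eauto.
  - eauto.
  - destruct H as (T & HT & H). destruct (HM T HT) as (T2 & HT2 & Hs).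
    exists T2; split; auto.
Qed.

Lemma cover_lsub F : forall T T2, cover T T2 -> lcov F (bG T) (bM T) -> lcov F (bG T2) (bM T2).
Proof.
  induction F; intros [G D Is M] T2 Hc H; apply cover_iff in Hc;
    destruct Hc as (HG & HD & HI & HM); simpl in H |- *;
    (destruct H as [H|H]; [ specialize (HG _ H); simpl in HG; exact HG |]); right; try tauto.
  - destruct H; split; [eapply IHF1|eapply IHF2]; try apply cover_iff; simpl; eauto.
  - destruct H; [left; eapply IHF1|right; eapply IHF2]; try apply cover_iff; simpl; eauto.
  - eapply IHF2; try apply cover_iff; simpl; eauto.
  - destruct H as (T & HT & H). destruct (HM T HT) as (T' & HT' & Hc).
    exists T'; split; auto. eapply IHF; eauto.
Qed.

Lemma rcov_cover F : forall D Is Y, rcov F D Is ->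
  (forall A, In A D -> rcov A (bD Y) (bI Y)) ->
  (forall x, In x Is -> exists y, In y (bI Y) /\ cover x y) -> rcov F (bD Y) (bI Y).
Proof.
  induction F; intros D Is Y H HD HI; simpl in H;
    (destruct H as [H|H]; [apply HD; auto|]); simpl; right; try tauto.
  - destruct H; [left|right]; eauto.
  - destruct H; split; eauto.
  - destruct H as (J & HJ & H1 & H2). destruct (HI J HJ) as (J' & HJ' & Hc).
    exists J'; split; auto. split.
    + eapply cover_lsub; eauto.
    + destruct J as [a b c d]. apply cover_iff in Hc. destruct Hc as (_ & Hc2 & Hc3 & _).
      eapply IHF2; eauto.
  - destruct H as (J & HJ & T & HT & H). destruct (HI J HJ) as (J' & HJ' & Hc).
    exists J'; split; auto.
    destruct J as [a b c d]. apply cover_iff in Hc. destruct Hc as (_ & _ & _ & Hc4).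
    destruct (Hc4 T HT) as (T' & HT' & HcT). exists T'; split; auto.
    destruct T as [a' b' c' d']. apply cover_iff in HcT. destruct HcT as (_ & Ht2 & Ht3 & _).
    eapply IHF; eauto.
Qed.

Lemma cover_trans X : forall Y Z, cover X Y -> cover Y Z -> cover X Z.
Proof.
  induction X as [G D Is M HI HM] using bseq_ind'. intros Y Z H1 H2.
  rewrite Forall_forall in HI, HM.
  apply cover_iff in H1. destruct H1 as (HG & HD & HIs & HMs).
  destruct Y as [G' D' Is' M']. pose proof H2 as H2'.
  apply cover_iff in H2. destruct H2 as (HG' & HD' & HIs' & HMs').
  simpl in *. apply cover_iff; repeat split.
  - intros A HA. eapply lcov_trans; [apply HG; auto| exact HG'|].
    intros T HT. destruct (HMs' T HT) as (T2 & ? & ?). exists T2; split; auto.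
    intro F. apply cover_lsub; auto.
  - intros A HA. eapply rcov_cover; eauto.
  - intros x Hx. destruct (HIs x Hx) as (y & Hy & Hc). destruct (HIs' y Hy) as (z & ? & ?).
    exists z; split; eauto.
  - intros x Hx. destruct (HMs x Hx) as (y & Hy & Hc). destruct (HMs' y Hy) as (z & ? & ?).
    exists z; split; eauto.
Qed.
#[local] Hint Resolve in_eq in_cons : core.

Fixpoint ccomp (c1 c2 : bctx) : bctx :=
  match c1 with
  | BHole => c2
  | BImp G D Is M c => BImp G D Is M (ccomp c c2)
  | BMod G D Is M c => BMod G D Is M (ccomp c c2)
  end.

Lemma bfill_comp c1 c2 X : bfill (ccomp c1 c2) X = bfill c1 (bfill c2 X).
Proof. induction c1; simpl; congruence. Qed.

Lemma cik_deep S : cik S -> forall cc, cik (bfill cc S).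
Proof.
  induction 1; intro cc; rewrite <- ?bfill_comp.
  - eapply cik_exch; eauto. rewrite bfill_comp; auto.
  - apply cik_bot.
  - apply cik_top.
  - apply cik_ax.
  - apply cik_andL. rewrite bfill_comp; auto.
  - apply cik_andR; rewrite bfill_comp; auto.
  - apply cik_orL; rewrite bfill_comp; auto.
  - apply cik_orR; rewrite bfill_comp; auto.
  - apply cik_impL; rewrite bfill_comp; auto.
  - apply cik_impR; rewrite bfill_comp; auto.
  - apply cik_boxL; rewrite bfill_comp; auto.
  - apply cik_boxR; rewrite bfill_comp; auto.
  - apply cik_diaL; rewrite bfill_comp; auto.
  - apply cik_diaR; rewrite bfill_comp; auto.
  - apply cik_trans; rewrite bfill_comp; auto.
  - apply cik_inter_fc; rewrite bfill_comp; auto.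
  - apply cik_inter_bc; rewrite bfill_comp; auto.
Qed.

Definition reach S1 S2 := forall c, cik (bfill c S1) -> cik (bfill c S2).

Lemma reach_refl S : reach S S.
Proof. intros c H; auto. Qed.
Lemma reach_trans A B C : reach A B -> reach B C -> reach A C.
Proof. unfold reach; auto. Qed.
Lemma reach_ctx cc A B : reach A B -> reach (bfill cc A) (bfill cc B).
Proof. intros H c Hc. rewrite <- bfill_comp in *. auto. Qed.
Lemma reach_perm G D Is M G' D' Is' M' :
  Permutation G G' -> Permutation D D' -> Permutation Is Is' -> Permutation M M' ->
  reach (BS G D Is M) (BS G' D' Is' M').
Proof. intros; intros c Hc. eapply cik_exch; eauto. Qed.

Lemma cover_ctx c X Y : cover X Y -> cover (bfill c X) (bfill c Y).
Proof.
  induction c; intro H; [simpl; auto| |]; cbn [bfill]; apply cover_iff; simpl bG; simpl bD; simpl bI; simpl bM; repeat split.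
  all: try (intros; apply lcov_in; auto); try (intros; apply rcov_in; auto).
  all: first [ intros x [<-|Hx]; [eexists; split; [left; reflexivity| auto] |
         exists x; split; [right; auto | apply cover_refl]]
       | intros x Hx; exists x; split; [auto | apply cover_refl]].
Qed.

Lemma in_perm {A} (x : A) l : In x l -> exists l', Permutation l (x :: l').
Proof.
  intro H. apply in_split in H. destruct H as (l1 & l2 & ->).
  exists (l1 ++ l2). apply Permutation_sym, Permutation_middle.
Qed.

Lemma decomp c : forall X S', cover (bfill c X) S' ->
  exists c' X', reach (bfill c' X') S' /\ cover S' (bfill c' X') /\ cover X X' /\
   (forall Y Y', cover X' Y' -> cover Y Y' -> cover (bfill c Y) (bfill c' Y')).
Proof.
  induction c as [| G D Is M c IH | G D Is M c IH]; intros X S' H.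
  - exists BHole, S'. simpl. repeat split; auto using reach_refl, cover_refl.
  - cbn [bfill] in H. pose proof H as H0. destruct S' as [G' D' Is' M'].
    apply cover_iff in H. destruct H as (HG & HD & HI & HM). cbn [bG bD bI bM] in *.
    destruct (HI _ (or_introl eq_refl)) as (T' & HT' & HcT).
    destruct (IH _ _ HcT) as (c1 & X1 & Hr & Hb & Hx & Hd).
    apply in_perm in HT'. destruct HT' as (Is2 & HP).
    exists (BImp G' D' Is2 M' c1), X1. cbn [bfill]. split; [|split; [|split]]; auto.
    + eapply reach_trans.
      * apply (reach_ctx (BImp G' D' Is2 M' BHole)). exact Hr.
      * simpl. apply reach_perm; auto. apply Permutation_sym; auto.
    + apply cover_iff; cbn [bG bD bI bM]; repeat split.
      * intros; apply lcov_in; auto.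
      * intros; apply rcov_in; auto.
      * intros x Hx'. eapply Permutation_in in Hx'; [|exact HP]. destruct Hx' as [<-|Hx'].
        -- exists (bfill c1 X1); split; auto.
        -- exists x; split; auto using cover_refl.
      * intros x Hx'; exists x; split; auto using cover_refl.
    + intros Y Y' H1 H2.
      assert (Hc : cover (BS G' D' Is' M') (BS G' D' (bfill c1 Y' :: Is2) M')).
      { apply cover_iff; cbn [bG bD bI bM]; repeat split.
        * intros; apply lcov_in; auto.
        * intros; apply rcov_in; auto.
        * intros x Hx'. eapply Permutation_in in Hx'; [|exact HP]. destruct Hx' as [<-|Hx'].
          -- exists (bfill c1 Y'); split; auto. eapply cover_trans; [exact Hb|].
             apply cover_ctx; auto.
          -- exists x; split; auto using cover_refl.
        * intros x Hx'; exists x; split; auto using cover_refl. }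
      pose proof (cover_trans _ _ _ H0 Hc) as Hc2.
      apply cover_iff in Hc2. destruct Hc2 as (A1 & A2 & A3 & A4). cbn [bG bD bI bM] in *.
      apply cover_iff; cbn [bG bD bI bM]; repeat split; auto.
      intros x [<-|Hx'].
      * exists (bfill c1 Y'); split; auto.
      * apply A3; auto.
  - cbn [bfill] in H. pose proof H as H0. destruct S' as [G' D' Is' M'].
    apply cover_iff in H. destruct H as (HG & HD & HI & HM). cbn [bG bD bI bM] in *.
    destruct (HM _ (or_introl eq_refl)) as (T' & HT' & HcT).
    destruct (IH _ _ HcT) as (c1 & X1 & Hr & Hb & Hx & Hd).
    apply in_perm in HT'. destruct HT' as (M2 & HP).
    exists (BMod G' D' Is' M2 c1), X1. cbn [bfill]. split; [|split; [|split]]; auto.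
    + eapply reach_trans.
      * apply (reach_ctx (BMod G' D' Is' M2 BHole)). exact Hr.
      * simpl. apply reach_perm; auto. apply Permutation_sym; auto.
    + apply cover_iff; cbn [bG bD bI bM]; repeat split.
      * intros; apply lcov_in; auto.
      * intros; apply rcov_in; auto.
      * intros x Hx'; exists x; split; auto using cover_refl.
      * intros x Hx'. eapply Permutation_in in Hx'; [|exact HP]. destruct Hx' as [<-|Hx'].
        -- exists (bfill c1 X1); split; auto.
        -- exists x; split; auto using cover_refl.
    + intros Y Y' H1 H2.
      assert (Hc : cover (BS G' D' Is' M') (BS G' D' Is' (bfill c1 Y' :: M2))).
      { apply cover_iff; cbn [bG bD bI bM]; repeat split.
        * intros; apply lcov_in; auto.
        * intros; apply rcov_in; auto.
        * intros x Hx'; exists x; split; auto using cover_refl.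
        * intros x Hx'. eapply Permutation_in in Hx'; [|exact HP]. destruct Hx' as [<-|Hx'].
          -- exists (bfill c1 Y'); split; auto. eapply cover_trans; [exact Hb|].
             apply cover_ctx; auto.
          -- exists x; split; auto using cover_refl. }
      pose proof (cover_trans _ _ _ H0 Hc) as Hc2.
      apply cover_iff in Hc2. destruct Hc2 as (A1 & A2 & A3 & A4). cbn [bG bD bI bM] in *.
      apply cover_iff; cbn [bG bD bI bM]; repeat split; auto.
      intros x [<-|Hx'].
      * exists (bfill c1 Y'); split; auto.
      * apply A4; auto.
Qed.
#[local] Hint Resolve in_eq in_cons : core.

Lemma perm_node c G1 D1 I1 M1 G2 D2 I2 M2 :
  Permutation G1 G2 -> Permutation D1 D2 -> Permutation I1 I2 -> Permutation M1 M2 ->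
  cik (bfill c (BS G2 D2 I2 M2)) -> cik (bfill c (BS G1 D1 I1 M1)).
Proof. intros; eapply cik_exch; [apply Permutation_sym; eassumption ..|]; auto. Qed.

Lemma cover_step G D Is M G2 D2 Is2 M2 Z : cover (BS G D Is M) Z ->
  (forall A, In A G2 -> In A G \/ lcov A (bG Z) (bM Z)) ->
  (forall A, In A D2 -> In A D \/ rcov A (bD Z) (bI Z)) ->
  (forall x, In x Is2 -> In x Is \/ exists y, In y (bI Z) /\ cover x y) ->
  (forall x, In x M2 -> In x M \/ exists y, In y (bM Z) /\ cover x y) ->
  cover (BS G2 D2 Is2 M2) Z.
Proof.
  intros H H1 H2 H3 H4. apply cover_iff in H. destruct H as (A1 & A2 & A3 & A4).
  apply cover_iff; repeat split.
  - intros a Ha; destruct (H1 a Ha); auto.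
  - intros a Ha; destruct (H2 a Ha); auto.
  - intros a Ha; destruct (H3 a Ha); auto.
  - intros a Ha; destruct (H4 a Ha); auto.
Qed.

Lemma cover_mk G D Is M Z :
  (forall A, In A G -> lcov A (bG Z) (bM Z)) ->
  (forall A, In A D -> rcov A (bD Z) (bI Z)) ->
  (forall x, In x Is -> exists y, In y (bI Z) /\ cover x y) ->
  (forall x, In x M -> exists y, In y (bM Z) /\ cover x y) ->
  cover (BS G D Is M) Z.
Proof. intros; apply cover_iff; auto. Qed.

Ltac inl := simpl; repeat (rewrite in_app_iff; simpl); solve [intuition auto].

Ltac cgoal :=
  let a := fresh "a" in let Ha := fresh "Ha" in
  intros a Ha; cbn [bG bD bI bM] in *;
  repeat (rewrite in_app_iff in Ha; simpl in Ha);
  repeat (destruct Ha as [Ha|Ha]; [try subst a|]); try subst a;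
  first
  [ left; inl
  | right; apply lcov_in; inl
  | right; apply rcov_in; inl
  | apply lcov_in; inl
  | apply rcov_in; inl
  | right; eexists; split; [|apply cover_refl]; inl
  | eexists; split; [|apply cover_refl]; inl
  | right; assumption | assumption ].


Lemma cover_incl G D Is M G' D' Is' M' :
  incl G G' -> incl D D' -> incl Is Is' -> incl M M' ->
  cover (BS G D Is M) (BS G' D' Is' M').
Proof.
  intros; apply cover_mk; cbn [bG bD bI bM].
  - intros; apply lcov_in; auto.
  - intros; apply rcov_in; auto.
  - intros x Hx; exists x; split; auto using cover_refl.
  - intros x Hx; exists x; split; auto using cover_refl.
Qed.

Lemma lcov_bstar F : forall G M, lcov F G M -> lcov F G (map bstar M).
Proof.
  induction F; intros G M H; simpl in H |- *; try tauto.
  - destruct H as [H|[H1 H2]]; auto.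
  - destruct H as [H|[H1|H1]]; auto.
  - destruct H as [H|H]; auto.
  - destruct H as [H|(T & HT & H)]; auto. right. exists (bstar T).
    split; [apply in_map; auto|]. destruct T; simpl in *; auto.
Qed.

Lemma lsub_bstar T : lsub T (bstar T).
Proof. intros F H. destruct T; simpl in *. apply lcov_bstar; auto. Qed.

Lemma lsub_refl T : lsub T T.
Proof. intros F H; auto. Qed.

Lemma lcov_mono2 F G M G2 M2 : lcov F G M -> (forall a, In a G -> In a G2) ->
  (forall T, In T M -> In (bstar T) M2 \/ In T M2) -> lcov F G2 M2.
Proof.
  intros H HG HM. eapply lcov_trans; [exact H| |].
  - intros; apply lcov_in; auto.
  - intros T HT. destruct (HM T HT); eexists; split; eauto using lsub_bstar, lsub_refl.
Qed.

Lemma cover_bstar T : forall T', cover T T' -> cover (bstar T) (bstar T').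
Proof.
  induction T as [G D Is M _ HM] using bseq_ind'. intros [G' D' Is' M'] H.
  rewrite Forall_forall in HM. apply cover_iff in H. destruct H as (A1 & A2 & A3 & A4).
  cbn [bG bD bI bM] in *. simpl bstar. apply cover_mk; cbn [bG bD bI bM].
  - intros a Ha. apply lcov_bstar; auto.
  - intros a [].
  - intros a [].
  - intros x Hx. apply in_map_iff in Hx. destruct Hx as (y & <- & Hy).
    destruct (A4 y Hy) as (y' & Hy' & Hc). exists (bstar y'); split; auto. apply in_map; auto.
Qed.

Lemma trans_fc c G D Is M S P PI PM :
  cik (bfill c (BS G D (BS (G ++ S) P PI (map bstar M ++ PM) :: Is) M)) ->
  cik (bfill c (BS G D (BS S P PI PM :: Is) M)).
Proof.
  intro H. apply (cik_trans c [] G D Is M S P PI PM). simpl.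
  assert (forall K, (forall T, In T K -> In T M) ->
     cik (bfill c (BS G D (BS (G ++ S) P PI (map bstar K ++ PM) :: Is) M)) ->
     cik (bfill c (BS G D (BS (G ++ S) P PI PM :: Is) M))) as HK.
  { induction K as [|T K IH]; intros HT Hc; simpl in *; auto.
    apply IH; auto. destruct (in_perm _ _ (HT T (or_introl eq_refl))) as (M2 & HP).
    eapply perm_node; [reflexivity .. | exact HP |].
    apply cik_inter_fc. eapply perm_node; [reflexivity .. | symmetry; exact HP |]. exact Hc. }
  apply (HK M); auto.
Qed.

Lemma perm_sub c G D Is M L Th I1 I2 TM :
  Permutation I1 I2 -> cik (bfill c (BS G D Is (BS L Th I2 TM :: M))) ->
  cik (bfill c (BS G D Is (BS L Th I1 TM :: M))).
Proof.
  intros HP H. pose proof (bfill_comp c (BMod G D Is M BHole)) as E. simpl in E.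
  rewrite <- E in *. eapply perm_node; [reflexivity | reflexivity | exact HP | reflexivity | exact H].
Qed.

Ltac pg HP tac := let a := fresh "a" in let Ha := fresh "Ha" in
  intros a Ha; eapply Permutation_in in Ha; [|exact HP]; destruct Ha as [<-|Ha];
  [tac | first [apply lcov_in; inl | apply rcov_in; inl | eexists; split; [|apply cover_refl]; inl]].

Ltac start :=
  let S' := fresh "S'" in let HS := fresh "HS" in
  intros S' HS; destruct (decomp _ _ _ HS) as (c' & X' & Hr & _ & Hx & Hd);
  apply (Hr BHole); cbn [bfill]; destruct X' as [Gs Ds Js Ms];
  pose proof Hx as Hx0; apply cover_iff in Hx; destruct Hx as (HG & HD & HI & HM);
  cbn [bG bD bI bM] in HG, HD, HI, HM.

Lemma adm S : cik S -> forall S', cover S S' -> cik S'.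
Proof.
  induction 1.
  - start. apply IHcik. apply Hd. apply cover_refl.
    apply cover_mk.
    + intros a Ha. apply HG. eapply Permutation_in; eauto.
    + intros a Ha. apply HD. eapply Permutation_in; eauto.
    + intros a Ha. apply HI. eapply Permutation_in; eauto.
    + intros a Ha. apply HM. eapply Permutation_in; eauto.
  - start. pose proof (HG _ (in_eq _ _)) as Hp. simpl in Hp.
    destruct Hp as [Hp|[]]. destruct (in_perm _ _ Hp) as (G2 & HP).
    eapply perm_node; [exact HP| reflexivity .. |]. apply cik_bot.
  - start. pose proof (HD _ (in_eq _ _)) as Hp. simpl in Hp.
    destruct Hp as [Hp|[]]. destruct (in_perm _ _ Hp) as (D2 & HP).
    eapply perm_node; [reflexivity| exact HP | reflexivity .. |]. apply cik_top.
  - start. pose proof (HG _ (in_eq _ _)) as Hp. simpl in Hp.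
    destruct Hp as [Hp|[]]. destruct (in_perm _ _ Hp) as (G2 & HP).
    pose proof (HD _ (in_eq _ _)) as Hq. simpl in Hq.
    destruct Hq as [Hq|[]]. destruct (in_perm _ _ Hq) as (D2 & HQ).
    eapply perm_node; [exact HP| exact HQ | reflexivity .. |]. apply cik_ax.
  - start. pose proof (HG _ (in_eq _ _)) as Hp. simpl in Hp.
    destruct Hp as [Hp|[HA HB]].
    + destruct (in_perm _ _ Hp) as (G2 & HP).
      eapply perm_node; [exact HP| reflexivity .. |]. apply cik_andL. apply IHcik.
      assert (HXY : cover (BS Gs Ds Js Ms) (BS (A :: B :: G2) Ds Js Ms)).
      { apply cover_mk; try cgoal. intros a Ha. eapply Permutation_in in Ha; [|exact HP].
        destruct Ha as [<-|Ha]; [ simpl; right; split; apply lcov_in; inl | apply lcov_in; inl]. }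
      apply (Hd _ _ HXY). eapply cover_step; [exact (cover_trans _ _ _ Hx0 HXY)|..].
      { cgoal. } { cgoal. } { cgoal. } { cgoal. }
    + apply IHcik. apply Hd; [apply cover_refl|].
      eapply cover_step; [exact Hx0|..]; cgoal.

  - start. pose proof (HD _ (in_eq _ _)) as Hp. simpl in Hp.
    destruct Hp as [Hp|[HA|HB]].
    + destruct (in_perm _ _ Hp) as (D2 & HP).
      eapply perm_node; [reflexivity | exact HP| reflexivity .. |]. apply cik_andR.
      * apply IHcik1.
        assert (HXY : cover (BS Gs Ds Js Ms) (BS Gs (A :: D2) Js Ms)).
        { apply cover_mk; [cgoal | pg HP ltac:(simpl; right; left; apply rcov_in; inl) | cgoal | cgoal]. }
        apply (Hd _ _ HXY). eapply cover_step; [exact (cover_trans _ _ _ Hx0 HXY)|..]; cgoal.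
      * apply IHcik2.
        assert (HXY : cover (BS Gs Ds Js Ms) (BS Gs (B :: D2) Js Ms)).
        { apply cover_mk; [cgoal | pg HP ltac:(simpl; right; right; apply rcov_in; inl) | cgoal | cgoal]. }
        apply (Hd _ _ HXY). eapply cover_step; [exact (cover_trans _ _ _ Hx0 HXY)|..]; cgoal.
    + apply IHcik1. apply Hd; [apply cover_refl|]. eapply cover_step; [exact Hx0|..]; cgoal.
    + apply IHcik2. apply Hd; [apply cover_refl|]. eapply cover_step; [exact Hx0|..]; cgoal.
  - start. pose proof (HG _ (in_eq _ _)) as Hp. simpl in Hp.
    destruct Hp as [Hp|[HA|HB]].
    + destruct (in_perm _ _ Hp) as (G2 & HP).
      eapply perm_node; [exact HP| reflexivity .. |]. apply cik_orL.
      * apply IHcik1.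
        assert (HXY : cover (BS Gs Ds Js Ms) (BS (A :: G2) Ds Js Ms)).
        { apply cover_mk; [pg HP ltac:(simpl; right; left; apply lcov_in; inl) | cgoal | cgoal | cgoal]. }
        apply (Hd _ _ HXY). eapply cover_step; [exact (cover_trans _ _ _ Hx0 HXY)|..]; cgoal.
      * apply IHcik2.
        assert (HXY : cover (BS Gs Ds Js Ms) (BS (B :: G2) Ds Js Ms)).
        { apply cover_mk; [pg HP ltac:(simpl; right; right; apply lcov_in; inl) | cgoal | cgoal | cgoal]. }
        apply (Hd _ _ HXY). eapply cover_step; [exact (cover_trans _ _ _ Hx0 HXY)|..]; cgoal.
    + apply IHcik1. apply Hd; [apply cover_refl|]. eapply cover_step; [exact Hx0|..]; cgoal.
    + apply IHcik2. apply Hd; [apply cover_refl|]. eapply cover_step; [exact Hx0|..]; cgoal.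
  - start. pose proof (HD _ (in_eq _ _)) as Hp. simpl in Hp.
    destruct Hp as [Hp|[HA HB]].
    + destruct (in_perm _ _ Hp) as (D2 & HP).
      eapply perm_node; [reflexivity | exact HP| reflexivity .. |]. apply cik_orR. apply IHcik.
      assert (HXY : cover (BS Gs Ds Js Ms) (BS Gs (A :: B :: D2) Js Ms)).
      { apply cover_mk; [cgoal | pg HP ltac:(simpl; right; split; apply rcov_in; inl) | cgoal | cgoal]. }
      apply (Hd _ _ HXY). eapply cover_step; [exact (cover_trans _ _ _ Hx0 HXY)|..]; cgoal.
    + apply IHcik. apply Hd; [apply cover_refl|]. eapply cover_step; [exact Hx0|..]; cgoal.
  - start. pose proof (HG _ (in_eq _ _)) as Hp. simpl in Hp.
    destruct Hp as [Hp|HB].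
    + destruct (in_perm _ _ Hp) as (G2 & HP).
      eapply perm_node; [exact HP| reflexivity .. |]. apply cik_impL.
      * apply IHcik1.
        assert (HXY : cover (BS Gs Ds Js Ms) (BS (Imp A B :: G2) (A :: Ds) Js Ms)).
        { apply cover_mk; [pg HP ltac:(apply lcov_in; inl) | cgoal | cgoal | cgoal]. }
        apply (Hd _ _ HXY). eapply cover_step; [exact (cover_trans _ _ _ Hx0 HXY)|..]; cgoal.
      * apply IHcik2.
        assert (HXY : cover (BS Gs Ds Js Ms) (BS (B :: G2) Ds Js Ms)).
        { apply cover_mk; [pg HP ltac:(simpl; right; apply lcov_in; inl) | cgoal | cgoal | cgoal]. }
        apply (Hd _ _ HXY). eapply cover_step; [exact (cover_trans _ _ _ Hx0 HXY)|..]; cgoal.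
    + apply IHcik2. apply Hd; [apply cover_refl|]. eapply cover_step; [exact Hx0|..]; cgoal.
  - start. pose proof (HD _ (in_eq _ _)) as Hp. simpl in Hp.
    destruct Hp as [Hp|(J & HJ & HA & HB)].
    + destruct (in_perm _ _ Hp) as (D2 & HP).
      eapply perm_node; [reflexivity | exact HP| reflexivity .. |]. apply cik_impR. apply IHcik.
      assert (HXY : cover (BS Gs Ds Js Ms) (BS Gs D2 (BS [A] [B] [] [] :: Js) Ms)).
      { apply cover_mk; [cgoal | pg HP ltac:(simpl; right; exists (BS [A] [B] [] []);
           split; [inl| split; [apply lcov_in|apply rcov_in]; inl]) | cgoal | cgoal]. }
      apply (Hd _ _ HXY). eapply cover_step; [exact (cover_trans _ _ _ Hx0 HXY)|..]; cgoal.
    + apply IHcik. apply Hd; [apply cover_refl|]. eapply cover_step; [exact Hx0|..]; try cgoal.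
      intros x [<-|Hx]; auto. right. exists J; split; auto.
      apply cover_mk; [intros a [<-|[]]; auto | intros a [<-|[]]; auto | intros a [] | intros a []].
  - start. pose proof (HG _ (in_eq _ _)) as Hp. simpl in Hp.
    destruct Hp as [Hp|[]]. destruct (in_perm _ _ Hp) as (G2 & HP).
    destruct (HM _ (in_eq _ _)) as ([S1 P1 PI1 PM1] & HT & HcT).
    destruct (in_perm _ _ HT) as (M2 & HQ).
    eapply perm_node; [exact HP| reflexivity | reflexivity | exact HQ |]. apply cik_boxL. apply IHcik.
    assert (HT2 : cover (BS S1 P1 PI1 PM1) (BS (A :: S1) P1 PI1 PM1))
      by (apply cover_incl; intros ? ?; inl).
    assert (HXY : cover (BS Gs Ds Js Ms) (BS (Box A :: G2) Ds Js (BS (A :: S1) P1 PI1 PM1 :: M2))).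
    { apply cover_mk; [pg HP ltac:(apply lcov_in; inl) | cgoal | cgoal | ].
      pg HQ ltac:(eexists; split; [inl| exact HT2]). }
    apply (Hd _ _ HXY). eapply cover_step; [exact (cover_trans _ _ _ Hx0 HXY)|..]; try cgoal.
    intros x [<-|Hx]; [|left; auto]. right. eexists; split; [inl|].
    eapply cover_step; [exact (cover_trans _ _ _ HcT HT2)|..]; cgoal.
  - start. pose proof (HD _ (in_eq _ _)) as Hp. simpl in Hp.
    destruct Hp as [Hp|(J & HJ & T & HT & HA)].
    + destruct (in_perm _ _ Hp) as (D2 & HP).
      eapply perm_node; [reflexivity | exact HP| reflexivity .. |]. apply cik_boxR. apply IHcik.
      assert (HXY : cover (BS Gs Ds Js Ms) (BS Gs D2 (BS [] [] [] [BS [] [A] [] []] :: Js) Ms)).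
      { apply cover_mk; [cgoal | pg HP ltac:(simpl; right; eexists; split; [inl|];
           eexists; split; [inl|]; apply rcov_in; inl) | cgoal | cgoal]. }
      apply (Hd _ _ HXY). eapply cover_step; [exact (cover_trans _ _ _ Hx0 HXY)|..]; cgoal.
    + apply IHcik. apply Hd; [apply cover_refl|]. eapply cover_step; [exact Hx0|..]; try cgoal.
      intros x [<-|Hx]; auto. right. exists J; split; auto.
      apply cover_mk; [intros a [] | intros a [] | intros a [] | ].
      intros a [<-|[]]. exists T; split; auto.
      apply cover_mk; [intros b [] | intros b [<-|[]]; auto | intros b [] | intros b []].
  - start. pose proof (HG _ (in_eq _ _)) as Hp. simpl in Hp.
    destruct Hp as [Hp|(T & HT & HA)].
    + destruct (in_perm _ _ Hp) as (G2 & HP).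
      eapply perm_node; [exact HP| reflexivity .. |]. apply cik_diaL. apply IHcik.
      assert (HXY : cover (BS Gs Ds Js Ms) (BS G2 Ds Js (BS [A] [] [] [] :: Ms))).
      { apply cover_mk; [pg HP ltac:(simpl; right; eexists; split; [inl|]; apply lcov_in; inl)
          | cgoal | cgoal | cgoal]. }
      apply (Hd _ _ HXY). eapply cover_step; [exact (cover_trans _ _ _ Hx0 HXY)|..]; cgoal.
    + apply IHcik. apply Hd; [apply cover_refl|]. eapply cover_step; [exact Hx0|..]; try cgoal.
      intros x [<-|Hx]; auto. right. exists T; split; auto.
      apply cover_mk; [intros b [<-|[]]; auto | intros b [] | intros b [] | intros b []].
  - start. pose proof (HD _ (in_eq _ _)) as Hp. simpl in Hp.
    destruct Hp as [Hp|[]]. destruct (in_perm _ _ Hp) as (D2 & HP).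
    destruct (HM _ (in_eq _ _)) as ([S1 P1 PI1 PM1] & HT & HcT).
    destruct (in_perm _ _ HT) as (M2 & HQ).
    eapply perm_node; [reflexivity | exact HP| reflexivity | exact HQ |]. apply cik_diaR. apply IHcik.
    assert (HT2 : cover (BS S1 P1 PI1 PM1) (BS S1 (A :: P1) PI1 PM1))
      by (apply cover_incl; intros ? ?; inl).
    assert (HXY : cover (BS Gs Ds Js Ms) (BS Gs (Dia A :: D2) Js (BS S1 (A :: P1) PI1 PM1 :: M2))).
    { apply cover_mk; [cgoal | pg HP ltac:(apply rcov_in; inl) | cgoal | ].
      pg HQ ltac:(eexists; split; [inl| exact HT2]). }
    apply (Hd _ _ HXY). eapply cover_step; [exact (cover_trans _ _ _ Hx0 HXY)|..]; try cgoal.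
    intros x [<-|Hx]; [|left; auto]. right. eexists; split; [inl|].
    eapply cover_step; [exact (cover_trans _ _ _ HcT HT2)|..]; cgoal.

  - start.
    destruct (HI _ (in_eq _ _)) as ([S1 P1 PI1 PM1] & HJ & HcJ).
    destruct (in_perm _ _ HJ) as (J2 & HP).
    eapply perm_node; [reflexivity | reflexivity | exact HP | reflexivity |]. apply trans_fc. apply IHcik.
    assert (HJ2 : cover (BS S1 P1 PI1 PM1) (BS (Gs ++ S1) P1 PI1 (map bstar Ms ++ PM1)))
      by (apply cover_incl; intros ? ?; inl).
    assert (HXY : cover (BS Gs Ds Js Ms) (BS Gs Ds (BS (Gs ++ S1) P1 PI1 (map bstar Ms ++ PM1) :: J2) Ms)).
    { apply cover_mk; [cgoal | cgoal | | cgoal].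
      pg HP ltac:(eexists; split; [inl| exact HJ2]). }
    apply (Hd _ _ HXY). eapply cover_step; [exact (cover_trans _ _ _ Hx0 HXY)|..]; try cgoal.
    intros x [<-|Hx]; [|left; auto]. right. eexists; split; [inl|].
    pose proof HcJ as HcJ'. apply cover_iff in HcJ'. destruct HcJ' as (B1 & B2 & B3 & B4).
    cbn [bG bD bI bM] in *.
    apply cover_mk; cbn [bG bD bI bM].
    + intros a Ha. apply in_app_or in Ha. destruct Ha as [Ha|Ha].
      * eapply lcov_mono2; [apply HG; inl| intros; inl |].
        intros T HT0; left; apply in_or_app; left; apply in_map; auto.
      * eapply lcov_mono2; [apply B1; auto| intros; inl |].
        intros T HT0; right; inl.
    + auto.
    + auto.
    + intros y Hy. destruct (B4 y Hy) as (z & Hz & Hc). exists z; split; auto. inl.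
  - start.
    destruct (HI _ (in_eq _ _)) as ([S1 P1 PI1 PM1] & HJ & HcJ).
    destruct (in_perm _ _ HJ) as (J2 & HP).
    destruct (HM _ (in_eq _ _)) as (T' & HT & HcT).
    destruct (in_perm _ _ HT) as (M2 & HQ).
    eapply perm_node; [reflexivity | reflexivity | exact HP | exact HQ |]. apply cik_inter_fc. apply IHcik.
    assert (HJ2 : cover (BS S1 P1 PI1 PM1) (BS S1 P1 PI1 (bstar T' :: PM1)))
      by (apply cover_incl; intros ? ?; inl).
    assert (HXY : cover (BS Gs Ds Js Ms) (BS Gs Ds (BS S1 P1 PI1 (bstar T' :: PM1) :: J2) (T' :: M2))).
    { apply cover_mk; [cgoal | cgoal | | ].
      - pg HP ltac:(eexists; split; [inl| exact HJ2]).
      - intros a Ha. exists a; split; [|apply cover_refl]. eapply Permutation_in; eauto. }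
    apply (Hd _ _ HXY). eapply cover_step; [exact (cover_trans _ _ _ Hx0 HXY)|..]; try cgoal.
    intros x [<-|Hx]; [|left; auto]. right. eexists; split; [inl|].
    eapply cover_step; [exact (cover_trans _ _ _ HcJ HJ2)|..]; try cgoal.
    intros x [<-|Hx]; [|left; auto]. right. exists (bstar T'); split; [inl|]. apply cover_bstar; auto.
  - start.
    destruct (HM _ (in_eq _ _)) as ([L1 Th1 ThI1 ThM1] & HT & HcT).
    destruct (in_perm _ _ HT) as (M2 & HP).
    pose proof HcT as HcT'. apply cover_iff in HcT'. destruct HcT' as (B1 & B2 & B3 & B4).
    cbn [bG bD bI bM] in *.
    destruct (B3 _ (in_eq _ _)) as (Q' & HQ & HcQ).
    destruct (in_perm _ _ HQ) as (ThI2 & HQP).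
    eapply perm_node; [reflexivity | reflexivity | reflexivity | exact HP |].
    eapply perm_sub; [exact HQP|].
    apply cik_inter_bc. apply IHcik.
    assert (HT2 : cover (BS L1 Th1 ThI1 ThM1) (BS L1 Th1 (Q' :: ThI2) ThM1)).
    { apply cover_incl; try (intros ? ?; inl). intros a Ha. eapply Permutation_in; eauto. }
    assert (HXY : cover (BS Gs Ds Js Ms) (BS Gs Ds (BS [] [] [] [Q'] :: Js) (BS L1 Th1 (Q' :: ThI2) ThM1 :: M2))).
    { apply cover_mk; [cgoal | cgoal | cgoal | ].
      pg HP ltac:(eexists; split; [inl| exact HT2]). }
    apply (Hd _ _ HXY). eapply cover_step; [exact (cover_trans _ _ _ Hx0 HXY)|..]; try cgoal.
    intros x [<-|Hx]; [|left; auto]. right. eexists; split; [inl|].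
    apply cover_mk; [intros b [] | intros b [] | intros b [] | ].
    intros b [<-|[]]. exists Q'; split; simpl; auto.
Qed.
#[local] Hint Resolve in_eq in_cons : core.

Fixpoint pseq_ind' (P : pseq -> Prop)
  (H : forall G D B, Forall P B -> P (PS G D B)) (s : pseq) : P s :=
  match s with
  | PS G D B => H G D B
      ((fix f l := match l return Forall P l with [] => Forall_nil _
          | x :: l' => Forall_cons _ (pseq_ind' P H x) (f l') end) B)
  end.

Lemma bstar_fl T : bstar (fl T) = fl (perase T).
Proof.
  induction T as [G D B IH] using pseq_ind'. simpl. f_equal.
  rewrite !map_map. apply map_ext_in. rewrite Forall_forall in IH. auto.
Qed.

Lemma map_bstar_fl B : map fl (map perase B) = map bstar (map fl B).
Proof. rewrite !map_map. apply map_ext. intro; symmetry; apply bstar_fl. Qed.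

Fixpoint flc (c : pctx) : bctx :=
  match c with
  | PHole _ _ _ => BHole
  | PDown G D B c' => BMod G D [] (map fl B) (flc c')
  end.
Fixpoint hG c := match c with PHole G _ _ => G | PDown _ _ _ c => hG c end.
Fixpoint hD c := match c with PHole _ D _ => D | PDown _ _ _ c => hD c end.
Fixpoint hB c := match c with PHole _ _ B => B | PDown _ _ _ c => hB c end.

Lemma fl_pfill c G D B : fl (pfill c (PS G D B)) =
  bfill (flc c) (BS (hG c ++ G) (hD c ++ D) [] (map fl (hB c) ++ map fl B)).
Proof. induction c; simpl; [rewrite map_app; auto| rewrite IHc; auto]. Qed.

Lemma cw c X Y : cover X Y -> cik (bfill c X) -> cik (bfill c Y).
Proof. intros H1 H2. eapply adm; [exact H2|]. apply cover_ctx; auto. Qed.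

Fixpoint pcs (c : pctx) (q : pseq) : bseq :=
  match c with
  | PHole G D B => match q with PS QG QD QB => BS (G ++ QG) QD [] (map bstar (map fl B) ++ map fl QB) end
  | PDown G D B c' => BS G [] [] (map bstar (map fl B) ++ [pcs c' q])
  end.

Lemma push c : forall cc q, (forall J, cover (BS [] [] [pcs c q] []) J -> cik (bfill cc J)) ->
  cik (bfill cc (bfill (flc c) (BS (hG c) (hD c) [fl q] (map fl (hB c))))).
Proof.
  induction c as [G D B | G D B c IH]; intros cc [QG QD QB] H.
  - simpl. apply (trans_fc cc G D [] (map fl B) QG QD [] (map fl QB)). apply H.
    cbn [pcs]. apply cover_incl; [intros ? []|intros ? []| intros ? ?; inl | intros ? []].
  - cbn [flc bfill hG hD hB].
    pose proof (bfill_comp cc (BMod G D [] (map fl B) BHole)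
      (bfill (flc c) (BS (hG c) (hD c) [fl (PS QG QD QB)] (map fl (hB c))))) as E.
    cbn [bfill] in E. rewrite <- E. apply IH. intros J1 HJ1. rewrite bfill_comp. simpl.
    apply cover_iff in HJ1. destruct HJ1 as (_ & _ & HJ & _).
    destruct (HJ _ (in_eq _ _)) as (I1 & HI1 & HcI). destruct J1 as [a b Is1 m].
    simpl in HI1.
    apply (cw cc (BS G D [] (BS a b (I1 :: Is1) m :: map fl B))).
    { apply cover_mk; cbn [bG bD bI bM].
      - intros; apply lcov_in; auto.
      - intros; apply rcov_in; auto.
      - intros x [].
      - intros x [<-|Hx].
        + eexists; split; [left; reflexivity|]. apply cover_incl; intros ? ?; try inl.
          simpl in *. intuition (subst; auto).
        + exists x; split; auto using cover_refl. }
    apply cik_inter_bc.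
    apply (trans_fc cc G D [] (BS a b (I1 :: Is1) m :: map fl B) [] [] [] [I1]).
    apply H. apply cover_mk; cbn [bG bD bI bM]; [intros ? []|intros ? []| |intros ? []].
    intros x [<-|[]]. eexists; split; [left; reflexivity|].
    apply cover_mk; cbn [bG bD bI bM].
    + intros; apply lcov_in; inl.
    + intros ? [].
    + intros ? [].
    + intros x Hx. apply in_app_or in Hx. destruct Hx as [Hx|[<-|[]]].
      * exists x; split; [inl| apply cover_refl].
      * exists I1; split; [inl| auto].
Qed.

Lemma pcs_cover c q : cover (fl (pfill (pdown c) q)) (pcs c q).
Proof.
  induction c as [G D B | G D B c IH]; destruct q as [QG QD QB].
  - cbn [pdown pfill fl pcs app]. rewrite map_app, map_bstar_fl. apply cover_refl.
  - simpl pdown. simpl pfill. cbn [fl pcs]. apply cover_mk; cbn [bG bD bI bM].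
    + intros; apply lcov_in; auto.
    + intros ? [].
    + intros ? [].
    + intros x [<-|Hx].
      * exists (pcs c (PS QG QD QB)); split; [inl| auto].
      * exists x; split; [|apply cover_refl]. rewrite map_bstar_fl in Hx. inl.
Qed.
#[local] Hint Resolve in_eq in_cons : core.

Ltac ci := apply cover_incl; let x := fresh in let Hx := fresh in intros x Hx; simpl in *; repeat (rewrite in_app_iff in *; simpl in *); solve [intuition (subst; auto)].

Theorem theorem6p2 : forall S : pseq, nikm S -> cik (fl S).
Proof.
  induction 1.
  - rewrite fl_pfill in *. eapply cw; [|exact IHnikm]. apply cover_incl; intros x Hx.
    + rewrite in_app_iff in *. destruct Hx; [left; auto| right; eapply Permutation_in; eauto].
    + rewrite in_app_iff in *. destruct Hx; [left; auto| right; eapply Permutation_in; eauto].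
    + auto.
    + rewrite in_app_iff in *. destruct Hx; [left; auto| right].
      eapply Permutation_in; [apply Permutation_map; eauto| auto].
  - unfold pin. rewrite fl_pfill. simpl.
    apply (cw _ (BS (Bot :: hG c) (hD c) [] (map fl (hB c)))); [ci|]. apply cik_bot.
  - rewrite fl_pfill. simpl.
    apply (cw _ (BS (Var p :: hG c) (Var p :: hD c) [] (map fl (hB c)))); [ci|]. apply cik_ax.
  - unfold pin in *. rewrite fl_pfill in *. simpl in *.
    apply (cw _ (BS (And A B :: hG c) (hD c) [] (map fl (hB c)))); [ci|]. apply cik_andL.
    eapply cw; [|exact IHnikm]. ci.
  - unfold pout in *. rewrite fl_pfill in *. simpl in *.
    apply (cw _ (BS (hG c) (And A B :: hD c) [] (map fl (hB c)))); [ci|]. apply cik_andR.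
    + eapply cw; [|exact IHnikm1]. ci.
    + eapply cw; [|exact IHnikm2]. ci.
  - unfold pin in *. rewrite fl_pfill in *. simpl in *.
    apply (cw _ (BS (Or A B :: hG c) (hD c) [] (map fl (hB c)))); [ci|]. apply cik_orL.
    + eapply cw; [|exact IHnikm1]. ci.
    + eapply cw; [|exact IHnikm2]. ci.
  - unfold pout in *. rewrite fl_pfill in *. simpl in *.
    apply (cw _ (BS (hG c) (Or A B :: hD c) [] (map fl (hB c)))); [ci|]. apply cik_orR.
    eapply cw; [|exact IHnikm]. ci.
  - unfold pin, pout in *. rewrite fl_pfill in *. simpl in *.
    apply (cw _ (BS (Imp A B :: hG c) (hD c) [] (map fl (hB c)))); [ci|]. apply cik_impL.
    + eapply cw; [|exact IHnikm1]. ci.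
    + eapply cw; [|exact IHnikm2]. ci.
  - unfold pout. rewrite fl_pfill. simpl.
    apply (cw _ (BS (hG c) (Imp A B :: hD c) [] (map fl (hB c)))); [ci|]. apply cik_impR.
    apply (push c BHole (PS [A] [B] [])). intros J HJ.
    eapply adm; [apply (cik_deep _ IHnikm (BImp [] [] [] [] BHole))|]. simpl bfill.
    eapply cover_trans; [|exact HJ].
    apply cover_mk; cbn [bG bD bI bM]; [intros ? []|intros ? []| |intros ? []].
    intros x [<-|[]]. eexists; split; [left; reflexivity|]. apply pcs_cover.
  - rewrite fl_pfill in *. simpl in *.
    apply (cw _ (BS (Box A :: hG c) (hD c) [] (BS G D [] (map fl B) :: map fl (hB c)))); [ci|].
    apply cik_boxL. eapply cw; [|exact IHnikm]. ci.
  - unfold pout. rewrite fl_pfill. simpl.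
    apply (cw _ (BS (hG c) (Box A :: hD c) [] (map fl (hB c)))); [ci|]. apply cik_boxR.
    apply (push c BHole (PS [] [] [pout A])). intros J HJ.
    eapply adm; [apply (cik_deep _ IHnikm (BImp [] [] [] [] BHole))|]. simpl bfill.
    eapply cover_trans; [|exact HJ].
    apply cover_mk; cbn [bG bD bI bM]; [intros ? []|intros ? []| |intros ? []].
    intros x [<-|[]]. eexists; split; [left; reflexivity|]. apply pcs_cover.
  - unfold pin in *. rewrite fl_pfill in *. simpl in *.
    apply (cw _ (BS (Dia A :: hG c) (hD c) [] (map fl (hB c)))); [ci|]. apply cik_diaL.
    eapply cw; [|exact IHnikm]. ci.
  - rewrite fl_pfill in *. simpl in *.
    apply (cw _ (BS (hG c) (Dia A :: hD c) [] (BS G D [] (map fl B) :: map fl (hB c)))); [ci|].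
    apply cik_diaR. eapply cw; [|exact IHnikm]. ci.
  - unfold pin in *. rewrite fl_pfill in *. eapply cw; [|exact IHnikm]. ci.
  - unfold pout in *. rewrite fl_pfill in *. eapply cw; [|exact IHnikm]. ci.
Qed.
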